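(* Let $\mathfrak{H}$ be a Euclidean space and let $(\mathcal{X},\mathsf{S},\gamma,(\Lambda_{a})_{a\in\mathcal{A}})$ be a spectral decomposition system for $\mathfrak{H}$ such that the set $\{\Lambda_a\}_{a\in\mathcal{A}}$ is closed in $\mathscr{L}(\mathcal{X},\mathfrak{H})$. Let $D$ be a nonempty $\mathsf{S}$-invariant subset of $\mathcal{X}$, let $x,y\in\mathcal{X}$, and let $a\in\mathcal{A}$. Then $y\in N_{\mathsf{F}}(x;D)$ if and only if $\Lambda_a y\in N_{\mathsf{F}}(\Lambda_a x;\gamma^{-1}(D))$.
   Context: A Euclidean space is a finite-dimensional real Hilbert space; $\mathscr{L}(\mathcal{X},\mathfrak{H})$ carries the operator-norm topology. A spectral decomposition system for a Euclidean space $\mathfrak{H}$ is a tuple $(\mathcal{X},\mathsf{S},\gamma,(\Lambda_a)_{a\in\mathcal{A}})$ where $\mathcal{X}$ is a Euclidean space, $\mathsf{S}$ is a group acting on $\mathcal{X}$ such that each map $x\mapsto \mathsf{s}\cdot x$ is a linear isometry, $\gamma\colon\mathfrak{H}\to\mathcal{X}$ is a mapping, and each $\Lambda_a\colon\mathcal{X}\to\mathfrak{H}$ is a linear isometry, such that: [A] there exists a mapping $\tau\colon\mathcal{X}\to\mathcal{X}$ with $\tau(\mathsf{s}\cdot x)=\tau(x)$ for all $\mathsf{s},x$, $\tau(x)\in\mathsf{S}\cdot x$ for all $x$, and $\gamma\circ\Lambda_a=\tau$ for all $a\in\mathcal{A}$; [B] for every $X\in\mathfrak{H}$ there exists $a\in\mathcal{A}$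 with $X=\Lambda_a\gamma(X)$; [C] $\langle X,Y\rangle\le\langle\gamma(X),\gamma(Y)\rangle$ for all $X,Y\in\mathfrak{H}$. A set $D\subset\mathcal{X}$ is $\mathsf{S}$-invariant if $\mathsf{s}\cdot x\in D$ for all $x\in D$, $\mathsf{s}\in\mathsf{S}$. For a nonempty subset $C$ of a Euclidean space $\mathcal{H}$, the Fréchet normal cone is $N_{\mathsf{F}}(x;C)=\{y\in\mathcal{H}:\limsup_{z\to x,\,z\in C\setminus\{x\}}\langle z-x,y\rangle/\|z-x\|\le 0\}$ if $x\in C$ and $N_{\mathsf{F}}(x;C)=\varnothing$ if $x\notin C$. *)

(* Defs.v *)
From mathcomp Require Import all_boot all_order all_algebra.
From mathcomp Require Import all_classical all_reals all_analysis.

Set Implicit Arguments.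
Unset Strict Implicit.
Unset Printing Implicit Defensive.

Import Order.TTheory GRing.Theory Num.Theory.
Local Open Scope ring_scope.
Local Open Scope classical_set_scope.

(* Euclidean spaces are modelled as R^n, i.e. row vectors 'rV[R]_n,
   with the standard inner product.  Linear maps X -> H are matrices
   acting on the right: Λ x is written  x *m L. *)

Definition dotp (R : realType) (n : nat) (u v : 'rV[R]_n) : R := (u *m v^T) 0 0.

Definition enorm (R : realType) (n : nat) (u : 'rV[R]_n) : R := Num.sqrt (dotp u u).

Definition mx_isometry (R : realType) (n k : nat) (L : 'M[R]_(n, k)) : Prop :=
  forall x : 'rV[R]_n, enorm (x *m L) = enorm x.

Record isometric_group_action (R : realType) (n : nat) (G : Type) := {
  gmul : G -> G -> G;
  gone : G;
  ginv : G -> G;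
  gmulA : forall a b c, gmul a (gmul b c) = gmul (gmul a b) c;
  gmul1 : forall a, gmul gone a = a;
  gmulV : forall a, gmul (ginv a) a = gone;
  act : G -> 'rV[R]_n -> 'rV[R]_n;
  act1 : forall x, act gone x = x;
  actM : forall g h x, act (gmul g h) x = act g (act h x);
  act_linear : forall g (c : R) x y, act g (c *: x + y) = c *: act g x + act g y;
  act_isometry : forall g x, enorm (act g x) = enorm x
}.

Definition spectral_decomposition_system (R : realType) (m n : nat) (G : Type)
    (S : isometric_group_action R n G) (gamma : 'rV[R]_m -> 'rV[R]_n)
    (A : Type) (Lam : A -> 'M[R]_(n, m)) : Prop :=
  (forall a, mx_isometry (Lam a)) /\
  (exists tau : 'rV[R]_n -> 'rV[R]_n,
      (forall s x, tau (act S s x) = tau x) /\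
      (forall x, exists s, tau x = act S s x) /\
      (forall a x, gamma (x *m Lam a) = tau x)) /\
  (forall X : 'rV[R]_m, exists a, X = gamma X *m Lam a) /\
  (forall X Y : 'rV[R]_m, dotp X Y <= dotp (gamma X) (gamma Y)).

Definition S_invariant (R : realType) (n : nat) (G : Type)
    (S : isometric_group_action R n G) (D : set 'rV[R]_n) : Prop :=
  forall x s, D x -> D (act S s x).

(* Fréchet normal cone: y in N_F(x;C) iff x in C and
   limsup_{z -> x, z in C \ {x}} <z - x, y> / ||z - x|| <= 0,
   the limsup condition being unfolded as: for every eps > 0 there is
   delta > 0 such that the quotient is <= eps for all z in C \ {x}
   with ||z - x|| < delta. *)
Definition frechet_normal_cone (R : realType) (n : nat)
    (C : set 'rV[R]_n) (x : 'rV[R]_n) : set 'rV[R]_n :=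
  [set y | C x /\
     forall eps : R, 0 < eps -> exists2 delta : R, 0 < delta &
       forall z, C z -> z != x -> enorm (z - x) < delta ->
         dotp (z - x) y / enorm (z - x) <= eps].

(* the family {Lam a} viewed in the (finite-dimensional, hence
   operator-norm) topology of matrices *)
Definition mx_family_closed (R : realType) (n m : nat) (A : Type)
    (Lam : A -> 'M[R]_(n, m)) : Prop :=
  closed (range (fun a => (Lam a : 'M[R^o]_(n, m)))).

(* Main.v *)
Require Import Defs.
From mathcomp Require Import all_boot all_order all_algebra.
From mathcomp Require Import all_classical all_reals all_analysis.
From mathcomp Require Import ring lra.
Import Order.TTheory GRing.Theory Num.Theory.
Set Implicit Arguments.
Unset Strict Implicit.
Local Open Scope ring_scope.
Local Open Scope classical_set_scope.

Section Aux.
Variable R : realType.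

Lemma mul_self_ge0 (x : R) : 0 <= x * x.
Proof. by rewrite -expr2 sqr_ge0. Qed.

Lemma dotpE n (u v : 'rV[R]_n) : dotp u v = \sum_i u 0 i * v 0 i.
Proof. rewrite /dotp !mxE; apply: eq_bigr => i _; by rewrite mxE. Qed.

Lemma dotpC n (u v : 'rV[R]_n) : dotp u v = dotp v u.
Proof. rewrite !dotpE; apply: eq_bigr => i _; by rewrite mulrC. Qed.

Lemma dotpDl n (u w v : 'rV[R]_n) : dotp (u + w) v = dotp u v + dotp w v.
Proof. rewrite !dotpE -big_split; apply: eq_bigr => i _; by rewrite !mxE mulrDl. Qed.

Lemma dotpBl n (u w v : 'rV[R]_n) : dotp (u - w) v = dotp u v - dotp w v.
Proof. rewrite !dotpE -sumrB; apply: eq_bigr => i _; by rewrite !mxE mulrBl. Qed.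

Lemma dotpZl n c (u v : 'rV[R]_n) : dotp (c *: u) v = c * dotp u v.
Proof. rewrite !dotpE mulr_sumr; apply: eq_bigr => i _; by rewrite !mxE mulrA. Qed.

Lemma dotpDr n (u w v : 'rV[R]_n) : dotp v (u + w) = dotp v u + dotp v w.
Proof. by rewrite !(dotpC v) dotpDl. Qed.
Lemma dotpBr n (u w v : 'rV[R]_n) : dotp v (u - w) = dotp v u - dotp v w.
Proof. by rewrite !(dotpC v) dotpBl. Qed.
Lemma dotpZr n c (u v : 'rV[R]_n) : dotp v (c *: u) = c * dotp v u.
Proof. by rewrite !(dotpC v) dotpZl. Qed.

Lemma dotp_ge0 n (u : 'rV[R]_n) : 0 <= dotp u u.
Proof. rewrite dotpE; apply: sumr_ge0 => i _; exact: mul_self_ge0. Qed.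

Lemma dotp_eq0 n (u : 'rV[R]_n) : dotp u u = 0 -> u = 0.
Proof.
rewrite dotpE => H; apply/rowP => i; rewrite mxE.
have := psumr_eq0P (fun i _ => mul_self_ge0 (u 0 i)) H (i:=i) isT.
by move/eqP; rewrite mulf_eq0 orbb => /eqP.
Qed.

Lemma enorm_sq n (u : 'rV[R]_n) : enorm u ^+ 2 = dotp u u.
Proof. by rewrite /enorm sqr_sqrtr // dotp_ge0. Qed.

Lemma enorm_ge0 n (u : 'rV[R]_n) : 0 <= enorm u.
Proof. exact: sqrtr_ge0. Qed.

Lemma enorm_gt0 n (u : 'rV[R]_n) : u != 0 -> 0 < enorm u.
Proof.
move=> u0; rewrite lt_neqAle enorm_ge0 andbT; apply/eqP => e0.
move/eqP: u0; apply; apply: dotp_eq0; by rewrite -enorm_sq -e0 expr0n.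
Qed.

Lemma nsq_iso n k (L : 'M[R]_(n, k)) : mx_isometry L ->
  forall u, dotp (u *m L) (u *m L) = dotp u u.
Proof. by move=> hL u; rewrite -!enorm_sq hL. Qed.

Lemma dotp_iso n k (L : 'M[R]_(n, k)) : mx_isometry L ->
  forall u v, dotp (u *m L) (v *m L) = dotp u v.
Proof.
move=> hL u v.
have := nsq_iso hL (u + v); rewrite mulmxDl !dotpDl !dotpDr !nsq_iso //.
rewrite (dotpC (v *m L)) (dotpC v) => H.
have : 2 * dotp (u *m L) (v *m L) = 2 * dotp u v by lra.
by move/mulfI; apply; rewrite pnatr_eq0.
Qed.

Lemma nsqB n c (a b : 'rV[R]_n) :
  dotp (a - c *: b) (a - c *: b) = dotp a a - 2 * c * dotp a b + c ^+ 2 * dotp b b.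
Proof. rewrite !dotpBl !dotpBr !dotpZl !dotpZr (dotpC b a); ring. Qed.

Lemma nsqN n (a : 'rV[R]_n) : dotp (- a) (- a) = dotp a a.
Proof. rewrite !dotpE; apply: eq_bigr => i _; by rewrite !mxE mulrNN. Qed.

Lemma nsqD_le n (a b : 'rV[R]_n) :
  dotp (a + b) (a + b) <= 2 * dotp a a + 2 * dotp b b.
Proof.
have := dotp_ge0 (a - b).
rewrite !dotpBl !dotpBr !dotpDl !dotpDr (dotpC b a); lra.
Qed.

Lemma actB n G (S : isometric_group_action R n G) g u v :
  act S g (u - v) = act S g u - act S g v.
Proof.
have := act_linear S g (-1) v u.
by rewrite scaleN1r addrC => ->; rewrite scaleN1r addrC.
Qed.

Lemma act_nsq n G (S : isometric_group_action R n G) g u :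
  dotp (act S g u) (act S g u) = dotp u u.
Proof. by rewrite -!enorm_sq act_isometry. Qed.

Lemma act_inv n G (S : isometric_group_action R n G) s v :
  act S (ginv S s) (act S s v) = v.
Proof. by rewrite -actM gmulV act1. Qed.

End Aux.

Theorem proposition3p2 (R : realType) (m n : nat) (G : Type)
    (S : isometric_group_action R n G) (gamma : 'rV[R]_m -> 'rV[R]_n)
    (A : Type) (Lam : A -> 'M[R]_(n, m)) :
  spectral_decomposition_system S gamma Lam ->
  mx_family_closed Lam ->
  forall D : set 'rV[R]_n, D !=set0 -> S_invariant S D ->
  forall (x y : 'rV[R]_n) (a : A),
    frechet_normal_cone D x y <->
    frechet_normal_cone (gamma @^-1` D) (x *m Lam a) (y *m Lam a).
Proof.
move=> [Liso [[tau [tauS [tauO gL]]] [gB gC]]] _ D _ DS x y a.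
have gnsq : forall X, dotp (gamma X) (gamma X) = dotp X X.
  by move=> X; have [b Hb] := gB X; rewrite [in RHS]Hb nsq_iso.
have gne : forall X Y, dotp (gamma X - gamma Y) (gamma X - gamma Y)
    <= dotp (X - Y) (X - Y).
  move=> X Y; rewrite !dotpBl !dotpBr !gnsq (dotpC (gamma Y)) (dotpC Y).
  have := gC X Y; lra.
have inD : forall z, D z -> D (gamma (z *m Lam a)).
  by move=> z Dz; rewrite gL; have [s ->] := tauO z; exact: DS.
have wlem : forall Z v, D (gamma Z) -> exists2 w, D w &
    dotp (w - v) (w - v) <= dotp (Z - v *m Lam a) (Z - v *m Lam a).
  move=> Z v DZ; have [s Hs] := tauO v.
  exists (act S (ginv S s) (gamma Z)); first exact: DS.
  have -> : act S (ginv S s) (gamma Z) - v =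
    act S (ginv S s) (gamma Z - act S s v) by rewrite actB act_inv.
  by rewrite act_nsq -Hs -(gL a); exact: gne.
split.
- move=> [Dx Hx]; split; first exact: inD.
  move=> e e0.
  pose K := e^-1. pose ny := enorm y.
  pose Cp := 2 + 3 * (K * ny).
  have K0 : 0 < K by rewrite invr_gt0.
  have ny0 : 0 <= ny := enorm_ge0 y.
  have Kny0 : 0 <= K * ny by apply: mulr_ge0 => //; exact: ltW.
  have Cp0 : 0 < Cp by rewrite /Cp; lra.
  have [d1 d10 Hd1] := Hx (e / (2 * Cp)) (divr_gt0 e0 (mulr_gt0 (ltr0Sn _ 1) Cp0)).
  exists (d1 / Cp); first exact: divr_gt0.
  move=> Z DZ ZnX Zlt.
  pose u := Z - x *m Lam a.
  pose d := enorm u.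
  have d0 : 0 < d by apply: enorm_gt0; rewrite subr_eq0.
  have ud : dotp u u = d ^+ 2 by rewrite enorm_sq.
  pose c := K * d.
  have c0 : 0 < c by apply: mulr_gt0.
  have [w Dw Hw] := wlem Z (x + c *: y) DZ.
  have E1 : Z - (x + c *: y) *m Lam a = u - c *: (y *m Lam a).
    by rewrite mulmxDl -scalemxAl /u opprD addrA.
  have E2 : w - (x + c *: y) = (w - x) - c *: y by rewrite opprD addrA.
  have yy : dotp y y = ny ^+ 2 by rewrite enorm_sq.
  have Hw0 := Hw.
  rewrite E1 E2 !nsqB ud nsq_iso // in Hw.
  have Hp : dotp (w - x) (w - x) <= (d * Cp) ^+ 2.
    have e3 : w - x = (w - (x + c *: y)) + c *: y by rewrite E2 subrK.
    have h1 := nsqD_le (w - (x + c *: y)) (c *: y).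
    have h2 := nsqD_le u (- (c *: (y *m Lam a))).
    rewrite nsqN !dotpZl !dotpZr nsq_iso // ud yy in h2.
    rewrite !dotpZl !dotpZr -e3 yy in h1.
    rewrite E1 in Hw0.
    have h3 : 0 <= d ^+ 2 * (12 * (K * ny) + 3 * (K * ny) ^+ 2).
      apply: mulr_ge0; first exact: sqr_ge0.
      have := sqr_ge0 (K * ny); lra.
    have h4 : c * (c * ny ^+ 2) = (K * ny) ^+ 2 * d ^+ 2 by rewrite /c; ring.
    have h5 : (d * Cp) ^+ 2 = d ^+ 2 * (4 + 12 * (K * ny) + 9 * (K * ny) ^+ 2)
      by rewrite /Cp; ring.
    rewrite h5; move: h1 h2 Hw0 h3; rewrite h4 /=; nra.
  have ep : enorm (w - x) <= d * Cp.
    have dC0 : 0 <= d * Cp by apply: mulr_ge0; apply: ltW.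
    by rewrite /enorm -(ger0_norm dC0) -sqrtr_sqr ler_sqrt ?sqr_ge0.
  have dCp : d * Cp < d1 by rewrite -ltr_pdivlMr.
  have hq : dotp (w - x) y <= e * d / 2.
    have [->|wx] := eqVneq w x.
      rewrite subrr dotpE big1 => [|i _]; last by rewrite mxE mul0r.
      by apply: mulr_ge0; [apply: mulr_ge0; apply: ltW|].
    have wx0 : 0 < enorm (w - x) by apply: enorm_gt0; rewrite subr_eq0.
    have := Hd1 w Dw wx (le_lt_trans ep dCp).
    rewrite ler_pdivrMr // => h.
    apply: (le_trans h).
    have -> : e * d / 2 = e / (2 * Cp) * (d * Cp).
      by field; rewrite gt_eqF.
    by apply: ler_wpM2l => //; apply: ltW; apply: divr_gt0 => //; apply: mulr_gt0.
  rewrite ler_pdivrMr //.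
  have ce : c * e = d by rewrite /c /K mulrAC mulVf ?gt_eqF // mul1r.
  have hpp := dotp_ge0 (w - x).
  have : c * dotp u (y *m Lam a) <= c * (e * d).
    rewrite [c * (e * d)]mulrA ce; move: Hw hq hpp; rewrite -/c; nra.
  by rewrite ler_pM2l // mulrC.
- move=> [DxL Hx]; split.
  + move: DxL; rewrite /preimage /= gL; have [s ->] := tauO x => Dsx.
    by rewrite -(act_inv S s x); apply: DS.
  + move=> e e0; have [d d0 Hd] := Hx e e0; exists d => // z Dz zx zd.
    have Hz : z *m Lam a - x *m Lam a = (z - x) *m Lam a by rewrite mulmxBl.
    have Ln : enorm ((z - x) *m Lam a) = enorm (z - x) := Liso a (z - x).
    have := Hd (z *m Lam a) (inD z Dz).
    rewrite Hz Ln dotp_iso //; apply => //.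
    apply/eqP => /eqP; rewrite -subr_eq0 Hz => /eqP H.
    move: zx; rewrite -subr_eq0 => /eqP; apply; apply: dotp_eq0.
    by rewrite -(nsq_iso (Liso a)) H dotpE big1 // => i _; rewrite mxE mul0r.
Qed.
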